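(* Let $A\in\mathbb{R}^{D\times D}$ be real symmetric and let $\hat A_1,\hat A_2,\dots$ be mutually independent random $D\times D$ matrices with $\mathbb{E}[\hat A_j]=A$ for all $j$. Define $\hat T_0=I$, $\hat T_1=\hat A_1$, and $\hat T_k=2\hat A_k\hat T_{k-1}-\hat T_{k-2}$ for $k\ge2$. Suppose there is a constant $\alpha$ such that $$4\,\mathbb{E}[\|\hat A_k\|^2]+2\,\mathbb{E}[\|\hat A_k\|]+1\le\alpha\qquad\text{for all }k\ge1.$$ Then for all $k\ge 0$, $$\mathbb{E}\big[\|\hat T_k\|_F^2\big]\le D\,\alpha^k.$$
   Context: For a $D\times D$ matrix $M$, $\|M\|$ denotes the spectral (operator) norm and $\|M\|_F=(\sum_{i,j}M_{ij}^2)^{1/2}$ the Frobenius norm. *)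

(* Defs.v *)
From HB Require Import structures.
From mathcomp Require Import all_boot all_order all_algebra.
From mathcomp Require Import all_classical all_reals all_analysis.
Set Implicit Arguments. Unset Strict Implicit. Unset Printing Implicit Defensive.
Import Order.TTheory GRing.Theory Num.Theory.
Local Open Scope classical_set_scope.
Local Open Scope ring_scope.

Section Defs.
Context {R : realType} {D : nat}.

Definition l2norm (v : 'cV[R]_D) : R := Num.sqrt (\sum_(i < D) v i 0 ^+ 2).

Definition opnorm (M : 'M[R]_D) : R :=
  sup [set l2norm (M *m v) | v in [set v : 'cV[R]_D | l2norm v <= 1]].

Definition frobnorm (M : 'M[R]_D) : R :=
  Num.sqrt (\sum_(i < D) \sum_(j < D) M i j ^+ 2).

(* Chebyshev-type recursion: chebp Ah k = (T_k, T_(k+1)) where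
   T_0 = I, T_1 = Ah 1, T_k = 2 Ah k T_(k-1) - T_(k-2). *)
Fixpoint chebp (Ah : nat -> 'M[R]_D) (k : nat) : 'M[R]_D * 'M[R]_D :=
  match k with
  | 0 => (1%:M, Ah 1%N)
  | k'.+1 => let: (a, b) := chebp Ah k' in (b, 2 *: (Ah k'.+2 *m b) - a)
  end.

Definition cheb (Ah : nat -> 'M[R]_D) (k : nat) : 'M[R]_D := (chebp Ah k).1.

Definition mx_sigma {d} {T : measurableType d} (X : T -> 'M[R]_D) : set (set T) :=
  <<s [set E | exists i j, preimage_set_system setT (fun t => X t i j) measurable E] >>.

Definition mutually_independent {d} {T : measurableType d}
    (P : probability T R) (I : set nat) (X : nat -> T -> 'M[R]_D) : Prop :=
  forall (s : seq nat) (E : nat -> set T),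
    uniq s -> (forall j, j \in s -> I j) ->
    (forall j, j \in s -> mx_sigma (X j) (E j)) ->
    P (\bigcap_(j in [set j | j \in s]) E j) = (\prod_(j <- s) fine (P (E j)))%:E.

End Defs.

(* Main.v *)
Require Import Defs.
From HB Require Import structures.
From mathcomp Require Import all_boot all_order all_algebra.
From mathcomp Require Import all_classical all_reals all_analysis.
From mathcomp Require Import ring lra.
From mathcomp Require Import measurable_realfun.
Import Order.TTheory GRing.Theory Num.Theory.
Local Open Scope classical_set_scope.
Local Open Scope ring_scope.
Section Norms.
Context {R : realType} {D : nat}.
Implicit Types (v : 'cV[R]_D) (M B C : 'M[R]_D).

Definition sqn v := \sum_(i < D) v i 0 ^+ 2.
Lemma l2normE v : l2norm v = Num.sqrt (sqn v). Proof. by []. Qed.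
Lemma sqn_ge0 v : 0 <= sqn v.
Proof. by apply: sumr_ge0 => i _; exact: sqr_ge0. Qed.
Lemma l2norm_ge0 v : 0 <= l2norm v.
Proof. exact: sqrtr_ge0. Qed.
Lemma l2norm_sq v : l2norm v ^+ 2 = sqn v.
Proof. by rewrite /l2norm sqr_sqrtr // sqn_ge0. Qed.
Lemma l2norm_le1 v : (l2norm v <= 1) = (sqn v <= 1).
Proof. by rewrite /l2norm -{1}sqrtr1 ler_sqrt. Qed.

Lemma coord_le1 v : l2norm v <= 1 -> forall j, `|v j 0| <= 1.
Proof.
rewrite l2norm_le1 => h j.
have : v j 0 ^+ 2 <= sqn v.
  rewrite /sqn (bigD1 j) //= lerDl; apply: sumr_ge0 => i _; exact: sqr_ge0.
move=> h2; rewrite ler_norml; apply/andP; split; nra.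
Qed.

Definition rs M (i : 'I_D) := \sum_(j < D) `|M i j|.
Definition bnd M := Num.sqrt (\sum_(i < D) rs M i ^+ 2).

Lemma Mv_coord M v : l2norm v <= 1 -> forall i, `|(M *m v) i 0| <= rs M i.
Proof.
move=> hv i; rewrite mxE; apply: le_trans (ler_norm_sum _ _ _) _.
apply: ler_sum => j _; rewrite normrM.
have := coord_le1 _ hv j; have := normr_ge0 (M i j); have := normr_ge0 (v j 0); nra.
Qed.

Lemma Mv_bnd M v : l2norm v <= 1 -> l2norm (M *m v) <= bnd M.
Proof.
move=> hv; rewrite /l2norm /bnd ler_sqrt; last first.
  by apply: sumr_ge0 => i _; exact: sqr_ge0.
apply: ler_sum => i _; rewrite -real_normK ?num_real //.
have := Mv_coord M _ hv i; have := normr_ge0 ((M *m v) i 0); nra.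
Qed.

Definition Sset M := [set l2norm (M *m v) | v in [set v : 'cV[R]_D | l2norm v <= 1]].

Lemma Sset_ub M : has_ubound (Sset M).
Proof. by exists (bnd M) => _ [v hv <-]; exact: Mv_bnd. Qed.

Lemma l2norm0 : l2norm (0 : 'cV[R]_D) = 0.
Proof. by rewrite /l2norm big1 ?sqrtr0 // => i _; rewrite mxE expr0n. Qed.

Lemma Sset0 M : Sset M 0.
Proof. by exists 0; rewrite /= ?mulmx0 l2norm0 // ler01. Qed.

Lemma opnorm_ub M v : l2norm v <= 1 -> l2norm (M *m v) <= opnorm M.
Proof. by move=> hv; apply: ub_le_sup; [exact: Sset_ub| exists v]. Qed.

Lemma opnorm_ge0 M : 0 <= opnorm M.
Proof. by have := opnorm_ub M 0; rewrite mulmx0 l2norm0 ler01; apply. Qed.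

Lemma sqnZ c v : sqn (c *: v) = c ^+ 2 * sqn v.
Proof. by rewrite /sqn mulr_sumr; apply: eq_bigr => i _; rewrite mxE exprMn. Qed.

Lemma sqn0P v : sqn v = 0 -> v = 0.
Proof.
move=> h; apply/matrixP => i j; rewrite mxE (ord1 j).
have /eqP := h; rewrite psumr_eq0 => [/allP/(_ i)|i0 _]; last exact: sqr_ge0.
by rewrite mem_index_enum sqrf_eq0 => /(_ isT)/implyP/(_ isT)/eqP.
Qed.

Lemma opnorm_bound M v : sqn (M *m v) <= opnorm M ^+ 2 * sqn v.
Proof.
have [v0|vn0] := eqVneq (sqn v) 0.
  by rewrite v0 (sqn0P _ v0) mulmx0 mulr0 /sqn big1 // => i _; rewrite mxE expr0n.
have sp : 0 < sqn v by rewrite lt_def vn0 sqn_ge0.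
pose c := (l2norm v)^-1.
have lp : 0 < l2norm v by rewrite sqrtr_gt0.
have h1 : l2norm (c *: v) <= 1.
  rewrite l2norm_le1 sqnZ -l2norm_sq /c exprVn mulVf //.
  by rewrite expf_neq0 // gt_eqF.
have := opnorm_ub M _ h1; rewrite -scalemxAr.
have e : l2norm (c *: (M *m v)) = c * l2norm (M *m v).
  by rewrite !l2normE sqnZ sqrtrM ?sqr_ge0 // sqrtr_sqr ger0_norm // invr_ge0 ltW.
rewrite e /c => h2.
have h3 : l2norm (M *m v) <= opnorm M * l2norm v.
  by rewrite -ler_pdivrMr // mulrC.
rewrite -!l2norm_sq -exprMn; apply: lerXn2r => //; rewrite ?nnegrE ?l2norm_ge0 //.
by rewrite mulr_ge0 // ?opnorm_ge0 ?l2norm_ge0.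
Qed.

Definition frob2 M := \sum_(i < D) \sum_(j < D) M i j ^+ 2.
Lemma frob2_ge0 M : 0 <= frob2 M.
Proof. by apply: sumr_ge0 => i _; apply: sumr_ge0 => j _; exact: sqr_ge0. Qed.
Lemma frobnorm_sq M : frobnorm M ^+ 2 = frob2 M.
Proof. by rewrite /frobnorm sqr_sqrtr // frob2_ge0. Qed.

Lemma frob2_col M : frob2 M = \sum_(j < D) sqn (col j M).
Proof.
rewrite /frob2 exchange_big; apply: eq_bigr => j _; apply: eq_bigr => i _.
by rewrite mxE.
Qed.

Lemma frob2_mul M B : frob2 (M *m B) <= opnorm M ^+ 2 * frob2 B.
Proof.
rewrite !frob2_col mulr_sumr; apply: ler_sum => j _.
by rewrite !colE -mulmxA; exact: opnorm_bound.
Qed.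

Lemma frob2_key M B C :
  frob2 (2 *: (M *m B) - C) <=
  (4 * opnorm M ^+ 2 + 2 * opnorm M) * frob2 B + (2 * opnorm M + 1) * frob2 C.
Proof.
set a := opnorm M; set U := M *m B.
have hU : frob2 U <= a ^+ 2 * frob2 B by exact: frob2_mul.
have a0 : 0 <= a by exact: opnorm_ge0.
have e : frob2 (2 *: U - C) = \sum_i \sum_j (2 * U i j - C i j) ^+ 2.
  by apply: eq_bigr => i _; apply: eq_bigr => j _; rewrite !mxE.
rewrite e.
have [a00|ap] := eqVneq a 0.
  have U0 : frob2 U = 0.
    apply/eqP; rewrite eq_le frob2_ge0 andbT; apply: le_trans hU _.
    by rewrite a00 expr0n mul0r.
  have Uij i j : U i j = 0.
    move/eqP: U0; rewrite psumr_eq0; last first.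
      by move=> i0 _; apply: sumr_ge0 => j0 _; exact: sqr_ge0.
    move=> /allP/(_ i (mem_index_enum _))/implyP/(_ isT).
    rewrite psumr_eq0; last by move=> j0 _; exact: sqr_ge0.
    by move=> /allP/(_ j (mem_index_enum _))/implyP/(_ isT); rewrite sqrf_eq0 => /eqP.
  rewrite a00 !(mul0r, mulr0, expr0n, add0r, mul1r) /=.
  by apply: ler_sum => i _; apply: ler_sum => j _; rewrite Uij mulr0 sub0r sqrrN.
have apos : 0 < a by rewrite lt_def ap a0.
have pt i j : (2 * U i j - C i j) ^+ 2 <= (4 + 2 / a) * U i j ^+ 2 + (2 * a + 1) * C i j ^+ 2.
  have h : 0 <= (U i j + a * C i j) ^+ 2 / a by rewrite divr_ge0 // ?sqr_ge0 // ltW.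
  have e2 : (U i j + a * C i j) ^+ 2 / a = U i j ^+ 2 / a + 2 * U i j * C i j + a * C i j ^+ 2.
    by field; rewrite ap.
  rewrite e2 in h.
  have e3 : (4 + 2 / a) * U i j ^+ 2 = 4 * U i j ^+ 2 + 2 * (U i j ^+ 2 / a) by ring.
  rewrite e3; nra.
apply: le_trans (_ : \sum_i \sum_j ((4 + 2 / a) * U i j ^+ 2 + (2 * a + 1) * C i j ^+ 2) <= _).
  by apply: ler_sum => i _; apply: ler_sum => j _; exact: pt.
under eq_bigr do rewrite big_split /= -!mulr_sumr.
rewrite big_split /= -!mulr_sumr -/(frob2 U) -/(frob2 C).
rewrite lerD2r.
have hp : 0 <= 4 + 2 / a by rewrite addr_ge0 // divr_ge0 // ltW.
apply: le_trans (ler_wpM2l hp hU) _.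
rewrite mulrA; apply: ler_wpM2r; first exact: frob2_ge0.
rewrite mulrDl -mulrA (mulrC a^-1) expr2 mulrA mulfK ?ap //.
Qed.

End Norms.
Section Cheb.
Context {R : realType} {D : nat}.
Implicit Types (Ah : nat -> 'M[R]_D).
Lemma chebp_S1 Ah n : (chebp Ah n.+1).1 = (chebp Ah n).2.
Proof. by rewrite /=; case: (chebp Ah n). Qed.
Lemma chebp_S2 Ah n :
  (chebp Ah n.+1).2 = 2 *: (Ah n.+2 *m (chebp Ah n).2) - (chebp Ah n).1.
Proof. by rewrite /=; case: (chebp Ah n). Qed.
Lemma cheb0 Ah : cheb Ah 0 = 1%:M. Proof. by []. Qed.
Lemma cheb1 Ah : cheb Ah 1 = Ah 1%N. Proof. by []. Qed.
Lemma chebSS Ah n : cheb Ah n.+2 = 2 *: (Ah n.+2 *m cheb Ah n.+1) - cheb Ah n.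
Proof. by rewrite /cheb chebp_S1 chebp_S2 chebp_S1. Qed.

Lemma frob2_1 : frob2 (1%:M : 'M[R]_D) = D%:R.
Proof.
rewrite /frob2 (eq_bigr (fun _ => 1)); first by rewrite sumr_const card_ord.
move=> i _; rewrite (bigD1 i) //= big1 ?addr0; first by rewrite mxE eqxx expr1n.
by move=> j /negbTE ji; rewrite mxE eq_sym ji expr0n.
Qed.
End Cheb.

Section MxMeas.
Context {R : realType} {D : nat} d (U : measurableType d).
Definition mxm (F : U -> 'M[R]_D) := forall i l, measurable_fun setT (fun t => F t i l).

Lemma mxm_cst M : mxm (fun _ => M).
Proof. by move=> i l; exact: measurable_cst. Qed.

Lemma mxm_mul F G : mxm F -> mxm G -> mxm (fun t => F t *m G t).
Proof.
move=> mF mG i l.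
have -> : (fun t => (F t *m G t) i l) = (fun t => \sum_k F t i k * G t k l).
  by apply/funext => t; rewrite mxE.
by apply: measurable_sum => k; apply: measurable_funM.
Qed.

Lemma mxm_sub F G : mxm F -> mxm G -> mxm (fun t => F t - G t).
Proof.
move=> mF mG i l.
have -> : (fun t => (F t - G t) i l) = (fun t => F t i l - G t i l).
  by apply/funext => t; rewrite !mxE.
exact: measurable_funB.
Qed.

Lemma mxm_scale c F : mxm F -> mxm (fun t => c *: F t).
Proof.
move=> mF i l.
have -> : (fun t => (c *: F t) i l) = (fun t => c * F t i l).
  by apply/funext => t; rewrite !mxE.
by apply: measurable_funM => //; exact: measurable_cst.
Qed.

Lemma mxm_chebp (Ah : nat -> U -> 'M[R]_D) n :
  (forall j, (0 < j <= n.+1)%N -> mxm (Ah j)) ->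
  mxm (fun t => (chebp (fun j => Ah j t) n).1) /\
  mxm (fun t => (chebp (fun j => Ah j t) n).2).
Proof.
elim: n => [|n IH] h.
  by split; [exact: mxm_cst | exact: h].
have [m1 m2] : mxm (fun t => (chebp (fun j => Ah j t) n).1) /\
    mxm (fun t => (chebp (fun j => Ah j t) n).2).
  by apply: IH => j /andP[j0 jn]; apply: h; rewrite j0 /= (leq_trans jn).
split.
  have -> : (fun t => (chebp (fun j => Ah j t) n.+1).1) =
      (fun t => (chebp (fun j => Ah j t) n).2) by apply/funext => t; rewrite chebp_S1.
  exact: m2.
have -> : (fun t => (chebp (fun j => Ah j t) n.+1).2) =
    (fun t => 2 *: (Ah n.+2 t *m (chebp (fun j => Ah j t) n).2) -
      (chebp (fun j => Ah j t) n).1) by apply/funext => t; rewrite chebp_S2.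
apply: mxm_sub => //; apply: mxm_scale; apply: mxm_mul => //; apply: h; by rewrite /= leqnn.
Qed.

Lemma meas_frob2 F : mxm F -> measurable_fun setT (fun t => frob2 (F t)).
Proof.
move=> mF; apply: measurable_sum => i; apply: measurable_sum => j.
exact: measurable_funX.
Qed.
End MxMeas.
Section OpnormMeas.
Context {R : realType} {D : nat}.
Implicit Types (v : 'cV[R]_D) (M : 'M[R]_D).

Lemma sqr_le_norm (a b : R) : `|a| <= `|b| -> a ^+ 2 <= b ^+ 2.
Proof.
move=> h; rewrite -(real_normK (num_real a)) -(real_normK (num_real b)).
by apply: lerXn2r => //; rewrite nnegrE normr_ge0.
Qed.

Definition wv (zN : 'cV[int]_D * nat) : 'cV[R]_D :=
  (zN.2.+1%:R)^-1 *: map_mx (fun z : int => z%:~R) zN.1.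

Definition gfun (n : nat) M : R :=
  match unpickle n with
  | Some zN => if l2norm (wv zN) <= 1 then l2norm (M *m wv zN) else 0
  | None => 0
  end.

Lemma gfun_in n M : Sset M (gfun n M).
Proof.
rewrite /gfun; case: (unpickle n) => [zN|]; last exact: Sset0.
by case: ifPn => h; [exists (wv zN) | exact: Sset0].
Qed.

Lemma gfun_le n M : gfun n M <= bnd M.
Proof. by have [v hv <-] := gfun_in n M; exact: Mv_bnd. Qed.

Definition rnd (x : R) : int := if 0 <= x then Num.floor x else - Num.floor (- x).

Lemma rnd_le x : `|(rnd x)%:~R| <= `|x| :> R.
Proof.
rewrite /rnd; case: ifPn => hx.
  have h1 := floor_le x; have : (0 : R) <= (Num.floor x)%:~R.
    by rewrite ler0z floor_ge0.
  move=> h2; rewrite !ger0_norm //.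
rewrite intrN normrN; have hx' : 0 <= - x by rewrite oppr_ge0 ltW // ltNge.
have h1 := floor_le (- x); have : (0 : R) <= (Num.floor (- x))%:~R.
  by rewrite ler0z floor_ge0.
move=> h2; rewrite ger0_norm // -normrN ger0_norm //.
Qed.

Lemma rnd_err x : `|x - (rnd x)%:~R| <= 1 :> R.
Proof.
rewrite /rnd; case: ifPn => hx.
  have h1 := floor_le x; have h2 := floorD1_gt x.
  rewrite intrD in h2; rewrite ger0_norm ?subr_ge0 //; lra.
have h1 := floor_le (- x); have h2 := floorD1_gt (- x).
rewrite intrD in h2; rewrite intrN opprK ler_norml; apply/andP; split; lra.
Qed.

Lemma sq_lim (x y c : R) : 0 <= x -> 0 <= y -> 0 <= c ->
  (forall N : nat, x ^+ 2 <= y ^+ 2 + c / N.+1%:R) -> x <= y.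
Proof.
move=> x0 y0 c0 h; rewrite leNgt; apply/negP => yx.
have dp : 0 < x ^+ 2 - y ^+ 2 by nra.
have hb := archi_boundP (divr_ge0 c0 (ltW dp)).
set N := Num.Def.archi_bound _ in hb.
have := h N; have Np : (0 : R) < N.+1%:R by rewrite ltr0Sn.
have : c / N.+1%:R < x ^+ 2 - y ^+ 2.
  rewrite ltr_pdivrMr // -ltr_pdivrMl // mulrC; apply: lt_trans hb _.
  by rewrite ltr_nat.
move=> h1 h2; move: h1 h2; set q := c / _; set X := x ^+ 2; set Y := y ^+ 2; lra.
Qed.

Lemma opnorm_sups M : opnorm M = sups (fun n => gfun n M) 0.
Proof.
have hub : has_ubound [set gfun n M | n in [set n | (0 <= n)%N]].
  by exists (bnd M) => _ [n _ <-]; exact: gfun_le.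
rewrite /sups /=; apply/eqP; rewrite eq_le; apply/andP; split; last first.
  apply: ge_sup; first by exists (gfun 0 M), 0%N.
  by move=> _ [n _ <-]; apply: ub_le_sup; [exact: Sset_ub|exact: gfun_in].
set s := sup _.
have g0 n : 0 <= gfun n M.
  by have [v hv <-] := gfun_in n M; exact: l2norm_ge0.
have gs n : gfun n M <= s by apply: ub_le_sup => //; exists n.
have s0 : 0 <= s := le_trans (g0 0%N) (gs 0%N).
apply: ge_sup; first by exists 0; exact: Sset0.
move=> _ [v hv <-].
pose c := 2 * \sum_(i < D) rs M i ^+ 2.
apply: (sq_lim _ _ c) => //; first exact: l2norm_ge0.
  by rewrite mulr_ge0 // sumr_ge0 // => i _; exact: sqr_ge0.
move=> N.
have Np : (0 : R) < N.+1%:R by rewrite ltr0Sn.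
have Ni : (0 : R) <= N.+1%:R^-1 by rewrite invr_ge0 ltW.
pose zN := (\col_(j < D) rnd (v j 0 * N.+1%:R), N).
pose w := wv zN.
have wE j : w j 0 = (N.+1%:R)^-1 * (rnd (v j 0 * N.+1%:R))%:~R.
  by rewrite /w /wv !mxE.
have wle j : `|w j 0| <= `|v j 0|.
  rewrite wE normrM (ger0_norm Ni) ler_pdivrMl //.
  by apply: le_trans (rnd_le _) _; rewrite normrM (ger0_norm (ltW Np)) mulrC.
have werr j : `|v j 0 - w j 0| <= (N.+1%:R)^-1.
  have -> : v j 0 - w j 0 = (N.+1%:R)^-1 * (v j 0 * N.+1%:R - (rnd (v j 0 * N.+1%:R))%:~R).
    by rewrite wE; field; rewrite gt_eqF.
  rewrite normrM (ger0_norm Ni) ler_pdivrMl // mulfV ?gt_eqF //.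
  exact: rnd_err.
have hw : l2norm w <= 1.
  rewrite l2norm_le1; apply: le_trans _ (_ : sqn v <= 1); last by rewrite -l2norm_le1.
  by apply: ler_sum => j _; apply: sqr_le_norm; exact: wle.
have gw : gfun (pickle zN) M = l2norm (M *m w).
  by rewrite /gfun pickleK -/w hw.
have hMw : l2norm (M *m w) <= s by rewrite -gw.
rewrite l2norm_sq.
have hMw2 : sqn (M *m w) <= s ^+ 2.
  by rewrite -l2norm_sq; apply: lerXn2r; rewrite ?nnegrE ?l2norm_ge0.
apply: le_trans (_ : sqn (M *m v) <= sqn (M *m w) + c / N.+1%:R) _; last first.
  by rewrite lerD2r.
have -> : c / N.+1%:R = \sum_(i < D) (2 * rs M i ^+ 2 / N.+1%:R).
  by rewrite /c -mulr_suml -mulr_sumr.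
rewrite /sqn -big_split /=; apply: ler_sum => i _.
have hb := Mv_coord M v hv i; have ha := Mv_coord M w hw i.
have hd : `|(M *m v) i 0 - (M *m w) i 0| <= rs M i / N.+1%:R.
  rewrite !mxE -sumrB; apply: le_trans (ler_norm_sum _ _ _) _.
  rewrite /rs mulr_suml; apply: ler_sum => j _.
  rewrite -mulrBr normrM; apply: ler_wpM2l => //; exact: werr.
set b := (M *m v) i 0 in hb hd *; set a := (M *m w) i 0 in ha hd *.
set r := rs M i in hb ha hd *.
have e1 : b ^+ 2 = a ^+ 2 + (b - a) * (b + a) by ring.
have e2 : (b - a) * (b + a) <= `|b - a| * (`|b| + `|a|).
  apply: le_trans (ler_norm _) _; rewrite normrM ler_wpM2l //; exact: ler_normD.
have e3 : `|b - a| * (`|b| + `|a|) <= r / N.+1%:R * (2 * r).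
  apply: ler_pM => //; rewrite ?addr_ge0 //; lra.
rewrite e1 lerD2l; apply: le_trans e2 _; apply: le_trans e3 _.
by rewrite le_eqVlt; apply/orP; left; apply/eqP; ring.
Qed.

Lemma measurable_opnorm d (U : measurableType d) (F : U -> 'M[R]_D) :
  (forall i j, measurable_fun setT (fun t => F t i j)) ->
  measurable_fun setT (fun t => opnorm (F t)).
Proof.
move=> mF.
have -> : (fun t => opnorm (F t)) = (fun t => sups (fun n => gfun n (F t)) 0).
  by apply/funext => t; exact: opnorm_sups.
apply: (@measurable_realfun.measurable_fun_sups _ _ _ _ (fun n t => gfun n (F t)) 0%N).
  by move=> t _; exists (bnd (F t)) => _ [n _ <-]; exact: gfun_le.
move=> n; rewrite /gfun; case: (unpickle n) => [zN|]; last exact: measurable_cst.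
case: (l2norm (wv zN) <= 1); last exact: measurable_cst.
change (measurable_fun setT (Num.sqrt \o (fun t => sqn (F t *m wv zN)))).
apply: measurableT_comp.
  by apply: measurable_realfun.continuous_measurable_fun; exact: sqrt_continuous.
apply: measurable_sum => i; apply: measurable_realfun.measurable_funX.
under eq_fun do rewrite mxE.
apply: measurable_sum => j; apply: measurable_realfun.measurable_funM => //; exact: measurable_cst.
Qed.

End OpnormMeas.
Section Prod.
Local Open Scope ereal_scope.
Context d (T : measurableType d) (R : realType) (P : probability T R).
Variables G1 G2 : set (set T).
Hypothesis h1 : <<s G1 >> `<=` measurable.
Hypothesis h2 : <<s G2 >> `<=` measurable.
Hypothesis ind : forall A B, <<s G1 >> A -> <<s G2 >> B -> P (A `&` B) = P A * P B.

Local Notation T1 := (g_sigma_algebraType G1).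
Local Notation T2 := (g_sigma_algebraType G2).

Let mid1 : measurable_fun setT (fun t : T => (t : T1)).
Proof. by move=> _ Y mY; rewrite setTI; exact: h1. Qed.
Let mid2 : measurable_fun setT (fun t : T => (t : T2)).
Proof. by move=> _ Y mY; rewrite setTI; exact: h2. Qed.

Let id1 : {mfun T >-> T1} :=
  HB.pack (fun t : T => (t : T1)) (isMeasurableFun.Build _ _ _ _ _ mid1).
Let id2 : {mfun T >-> T2} :=
  HB.pack (fun t : T => (t : T2)) (isMeasurableFun.Build _ _ _ _ _ mid2).
Let mdiag : measurable_fun setT (fun t : T => ((t : T1), (t : T2))).
Proof. exact: measurable_fun_pair. Qed.
Let diag : {mfun T >-> (T1 * T2)%type} :=
  HB.pack (fun t : T => ((t : T1), (t : T2))) (isMeasurableFun.Build _ _ _ _ _ mdiag).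

Let P1 := distribution P id1.
Let P2 := distribution P id2.
Let Q := distribution P diag.

Let QE : forall X, measurable X -> (P1 \x P2) X = Q X.
Proof.
apply: product_measure_unique => A B mA mB.
exact: (ind _ _ mA mB).
Qed.

Lemma indep_integralM (X : T1 -> \bar R) (Y : T2 -> \bar R) :
  measurable_fun setT X -> measurable_fun setT Y ->
  (forall x, 0 <= X x) -> (forall y, 0 <= Y y) ->
  \int[P]_t (X t * Y t) = \int[P]_t X t * \int[P]_t Y t.
Proof.
move=> mX mY X0 Y0.
pose f := fun z : T1 * T2 => X z.1 * Y z.2.
have mf : measurable_fun setT f.
  apply: emeasurable_funM.
    exact: (measurableT_comp mX measurable_fst).
  exact: (measurableT_comp mY measurable_snd).
have f0 z : 0 <= f z by rewrite mule_ge0.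
have -> : \int[P]_t (X t * Y t) = \int[Q]_z f z.
  by rewrite ge0_integral_distribution.
rewrite -(eq_measure_integral _ (fun A mA _ => QE A mA)).
rewrite fubini_tonelli1 //.
rewrite /fubini_F /f /=.
under eq_integral do rewrite ge0_integralZl //.
rewrite ge0_integralZr //; last by rewrite integral_ge0.
have -> : \int[P2]_y Y y = \int[P]_t Y t by rewrite ge0_integral_distribution.
by rewrite ge0_integral_distribution.
Qed.

End Prod.
Section Indep.
Local Open Scope ereal_scope.
Context {R : realType} {D : nat} d (T : measurableType d) (P : probability T R)
  (Ahat : nat -> T -> 'M[R]_D).
Hypothesis hind : mutually_independent P [set j | (0 < j)%N] Ahat.
Hypothesis hmeas : forall j, (0 < j)%N -> forall i l : 'I_D,
  measurable_fun setT (fun t => Ahat j t i l).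

Definition Gen j : set (set T) := [set E | exists i l,
  preimage_set_system setT (fun t => Ahat j t i l) measurable E].

Lemma sig_meas j : (0 < j)%N -> <<s Gen j >> `<=` measurable.
Proof.
move=> j0; apply: smallest_sub; first exact: sigma_algebra_measurable.
move=> _ [i [l [B mB <-]]]; exact: hmeas.
Qed.

Definition Jk k : set (set T) := [set B | exists E : nat -> set T,
  (forall j, (0 < j < k)%N -> <<s Gen j >> (E j)) /\
  B = \bigcap_(j in [set j | (0 < j < k)%N]) E j].

Lemma Jk_meas k : <<s Jk k >> `<=` measurable.
Proof.
apply: smallest_sub; first exact: sigma_algebra_measurable.
move=> _ [E [hE ->]]; apply: bigcap_measurableType => j /andP[j0 jk].
by apply: (sig_meas j j0 (E j)); apply: hE; rewrite j0 jk.
Qed.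

Lemma sigT j : <<s Gen j >> setT.
Proof. exact: (@measurableT _ (g_sigma_algebraType (Gen j))). Qed.

Lemma sigI j A B : <<s Gen j >> A -> <<s Gen j >> B -> <<s Gen j >> (A `&` B).
Proof. exact: (@measurableI _ (g_sigma_algebraType (Gen j))). Qed.

Lemma Jk_setI k : setI_closed (Jk k).
Proof.
move=> _ _ [E [hE ->]] [F [hF ->]].
exists (fun j => E j `&` F j); split; first by move=> j hj; apply: sigI; [exact: hE|exact: hF].
by rewrite bigcapI.
Qed.

Lemma finP A : measurable A -> P A \is a fin_num.
Proof. by move=> mA; apply: fin_num_measure. Qed.

Lemma Jk_indep k A : (0 < k)%N -> <<s Gen k >> A ->
  forall B, <<s Jk k >> B -> P (A `&` B) = P A * P B.
Proof.
move=> k0 hA.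
have mA : measurable A := sig_meas k k0 A hA.
pose H := [set B : set T | measurable B /\ P (A `&` B) = P A * P B].
suff: <<s Jk k >> `<=` H by move=> hs B /hs [].
apply: lambda_system_subset; last by [].
- exact: Jk_setI.
- split.
  + by [].
  + by split; [exact: measurableT | rewrite setIT probability_setT mule1].
  + move=> C B BC [mC hC] [mB hB]; split; first exact: measurableD.
    have e1 : A `&` (C `\` B) = (A `&` C) `\` B by rewrite setIDA.
    have e2 : P (A `&` C `\` B) = P (A `&` C) - P (A `&` B).
      rewrite measureD //; first by rewrite -setIA (setIidr BC).
        exact: measurableI.
      by rewrite (le_lt_trans (probability_le1 _ _)) ?ltry //; exact: measurableI.
    have e3 : P (C `\` B) = P C - P B.
      rewrite measureD //; first by rewrite (setIidr BC).
      by rewrite (le_lt_trans (probability_le1 _ _)) ?ltry.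
    rewrite e1 e2 e3 hC hB muleBr //; first exact: finP.
    by apply: fin_num_adde_defr; exact: finP.
  + move=> F ndF hF; split; first by apply: bigcupT_measurable => i; case: (hF i).
    have mF i : measurable (F i) by case: (hF i).
    have c1 : (P \o F) n @[n --> \oo] --> P (\bigcup_n F n).
      apply: nondecreasing_cvg_mu => //; exact: bigcupT_measurable.
    have c2 : (P \o (fun n => A `&` F n)) n @[n --> \oo] --> P (\bigcup_n (A `&` F n)).
      apply: nondecreasing_cvg_mu.
      - by move=> i; exact: measurableI.
      - by apply: bigcupT_measurable => i; exact: measurableI.
      - by move=> m n mn; apply/subsetPset; apply: setIS; apply/subsetPset; exact: ndF.
    have c3 : (P A * (P \o F) n) @[n --> \oo] --> P A * P (\bigcup_n F n).
      by apply: cvgeZl => //; exact: finP.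
    have e : (fun n => P A * (P \o F) n) = P \o (fun n => A `&` F n).
      by apply/funext => n /=; case: (hF n) => _ ->.
    rewrite -e in c2; rewrite setI_bigcupr; exact: (cvg_unique _ c2 c3).
- move=> B; rewrite /Jk /= => -[E [hE ->]]; split.
    apply: bigcap_measurableType => j /andP[j0 jk].
    by apply: (sig_meas j j0 (E j)); apply: hE; rewrite j0 jk.
  move: hE; case: k k0 hA mA => // k _ hA mA hE.
  pose E' := fun j => if j == k.+1 then A else E j.
  have hs := hind (iota 1 k.+1) E' (iota_uniq _ _).
  have hpos j : j \in iota 1 k.+1 -> (0 < j)%N by rewrite mem_iota; case/andP.
  have hsig j : j \in iota 1 k.+1 -> mx_sigma (Ahat j) (E' j).
    rewrite mem_iota /E' => /andP[j0 jk]; case: eqP => [->|/eqP jn] //.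
    by apply: hE; rewrite j0 /= ltn_neqAle jn -ltnS.
  have := hs hpos hsig.
  have eA : \bigcap_(j in [set j | j \in iota 1 k.+1]) E' j =
      A `&` \bigcap_(j in [set j | (0 < j < k.+1)%N]) E j.
    apply/seteqP; split => t.
      move=> ht; split.
        have := ht k.+1; rewrite /E' eqxx /=; apply.
        by change (k.+1 \in iota 1 k.+1); rewrite mem_iota /= add1n ltnSn.
      move=> j /andP[j0 jk]; have := ht j; rewrite /E' (ltn_eqF jk) /=; apply.
      by change (j \in iota 1 k.+1); rewrite mem_iota j0 /= add1n ltnW.
    move=> [hA' hB] j; change (j \in iota 1 k.+1 -> E' j t).
    rewrite mem_iota /E' => /andP[j0 jk].
    case: eqP => [_|/eqP jn] //; apply: hB; rewrite /= j0 /=.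
    by rewrite ltn_neqAle jn -ltnS -(add1n k.+1).
  rewrite eA => ->.
  have hsB := hind (iota 1 k) E (iota_uniq _ _).
  have hposB j : j \in iota 1 k -> (0 < j)%N by rewrite mem_iota; case/andP.
  have hsigB j : j \in iota 1 k -> mx_sigma (Ahat j) (E j).
    rewrite mem_iota => /andP[j0 jk]; apply: hE; rewrite j0 /=.
    by move: jk; rewrite add1n.
  have := hsB hposB hsigB.
  have eB : \bigcap_(j in [set j | j \in iota 1 k]) E j =
      \bigcap_(j in [set j | (0 < j < k.+1)%N]) E j.
    apply/seteqP; split => t ht j hj; apply: ht; move: hj; rewrite /= mem_iota add1n //.
  rewrite eB => ->.
  have -> : iota 1 k.+1 = rcons (iota 1 k) k.+1.
    by rewrite -cats1 -[in LHS](addn1 k) iotaD add1n.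
  rewrite -cats1 big_cat big_seq1 /= /E' eqxx.
  have -> : (\prod_(i <- iota 1 k) fine (P (if i == k.+1 then A else E i)) =
      \prod_(j <- iota 1 k) fine (P (E j)))%R.
    apply: eq_big_seq => j; rewrite mem_iota => /andP[_ jk].
    by rewrite add1n in jk; rewrite ltn_eqF.
  rewrite EFinM (fineK (finP A mA)); exact: muleC.
Qed.

End Indep.

Lemma mEF d (T : measurableType d) (R : realType) (f : T -> R) :
  measurable_fun setT f -> measurable_fun setT (fun t => (f t)%:E).
Proof. by move=> mf; exact: ((measurable_EFinP _ _).2 mf). Qed.

Lemma int_lin d (T : measurableType d) (R : realType) (mu : {measure set T -> \bar R})
    (f g : T -> R) (c1 c2 : R) :
  measurable_fun setT f -> measurable_fun setT g ->
  (forall t, 0 <= f t) -> (forall t, 0 <= g t) -> 0 <= c1 -> 0 <= c2 ->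
  (\int[mu]_t ((c1 * f t + c2 * g t)%:E) =
   c1%:E * \int[mu]_t (f t)%:E + c2%:E * \int[mu]_t (g t)%:E)%E.
Proof.
move=> mf mg f0 g0 c10 c20.
under eq_integral do rewrite EFinD !EFinM.
rewrite ge0_integralD //.
- have f0' : forall t, setT t -> (0 <= (f t)%:E)%E by move=> t _; rewrite lee_fin.
  have g0' : forall t, setT t -> (0 <= (g t)%:E)%E by move=> t _; rewrite lee_fin.
  rewrite (ge0_integralZl_EFin mu measurableT f0' (mEF _ _ _ _ mf) c10).
  by rewrite (ge0_integralZl_EFin mu measurableT g0' (mEF _ _ _ _ mg) c20).
- by move=> t _; rewrite -EFinM lee_fin mulr_ge0.
- under eq_fun do rewrite -EFinM.
  by apply: mEF; apply: measurable_funM => //; exact: measurable_cst.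
- by move=> t _; rewrite -EFinM lee_fin mulr_ge0.
- under eq_fun do rewrite -EFinM.
  by apply: mEF; apply: measurable_funM => //; exact: measurable_cst.
Qed.

Lemma ebound (R : realType) (x : \bar R) (r : R) :
  (0 <= x)%E -> (x <= r%:E)%E -> exists y, x = y%:E /\ 0 <= y /\ y <= r.
Proof.
case: x => [y||] // y0 yr; exists y; split => //; split; by rewrite -lee_fin.
Qed.

Theorem mainTheorem3 (R : realType) (D : nat) (d : measure_display)
    (T : measurableType d) (P : probability T R)
    (A : 'M[R]_D) (Ahat : nat -> T -> 'M[R]_D) (alpha : R) :
  A^T = A ->
  mutually_independent P [set j | (0 < j)%N] Ahat ->
  (forall j, (0 < j)%N -> forall i l : 'I_D,
      P.-integrable setT (fun t => (Ahat j t i l)%:E) /\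
      (\int[P]_t (Ahat j t i l)%:E = (A i l)%:E)%E) ->
  (forall k, (0 < k)%N ->
      (4%:E * \int[P]_t ((opnorm (Ahat k t)) ^+ 2)%:E
       + 2%:E * \int[P]_t (opnorm (Ahat k t))%:E + 1 <= alpha%:E)%E) ->
  forall k : nat,
    (\int[P]_t ((frobnorm (cheb (fun j => Ahat j t) k)) ^+ 2)%:E
     <= (D%:R * alpha ^+ k)%:E)%E.
Proof.
move=> _ hind hint hal.
have hmeas : forall j, (0 < j)%N -> forall i l : 'I_D,
    measurable_fun setT (fun t => Ahat j t i l).
  move=> j j0 i l; apply/measurable_EFinP; exact: (measurable_int _ (hint j j0 i l).1).
pose fk n t := frob2 (cheb (fun j => Ahat j t) n).
have fk0 n t : 0 <= fk n t by exact: frob2_ge0.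
have mcheb n : mxm d T (fun t => cheb (fun j => Ahat j t) n).
  have := @mxm_chebp R D d T Ahat n; case.
    by move=> j /andP[j0 _] i l; exact: hmeas.
  by move=> h _.
have mfk n : measurable_fun setT (fk n) by exact: meas_frob2.
have mop k : (0 < k)%N -> measurable_fun setT (fun t => opnorm (Ahat k t)).
  by move=> k0; apply: measurable_opnorm; exact: hmeas.
have op0 k t : 0 <= opnorm (Ahat k t) by exact: opnorm_ge0.
have fin : forall k, (0 < k)%N -> exists a1 a2 : R,
    [/\ (\int[P]_t (opnorm (Ahat k t))%:E = a1%:E)%E,
        (\int[P]_t ((opnorm (Ahat k t)) ^+ 2)%:E = a2%:E)%E,
        0 <= a1, 0 <= a2 & 4 * a2 + 2 * a1 + 1 <= alpha].
  move=> k k0; have h := hal k k0.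
  have x10 : (0 <= \int[P]_t (opnorm (Ahat k t))%:E)%E.
    by apply: integral_ge0 => t _; rewrite lee_fin.
  have x20 : (0 <= \int[P]_t ((opnorm (Ahat k t)) ^+ 2)%:E)%E.
    by apply: integral_ge0 => t _; rewrite lee_fin sqr_ge0.
  move: h x10 x20.
  set x1 := (\int[P]_t (opnorm (Ahat k t))%:E)%E.
  set x2 := (\int[P]_t ((opnorm (Ahat k t)) ^+ 2)%:E)%E.
  move=> h x10 x20.
  have h1 : (2%:E * x1 <= alpha%:E)%E.
    apply: le_trans h; apply: le_trans (leeDl _ _); last by [].
    by apply: lee_paddl; [rewrite mule_ge0 | ].
  have h2 : (4%:E * x2 <= alpha%:E)%E.
    apply: le_trans h; apply: le_trans (leeDl _ _); last by [].
    by apply: leeDl; rewrite mule_ge0.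
  move: x1 x2 x10 x20 h h1 h2 => [a1||] [a2||] //= a10 a20 h h1 h2.
  - by exists a1, a2; split.
  - by move: h2; rewrite mulry gtr0_sg // mul1e leye_eq.
  - by move: h1; rewrite mulry gtr0_sg // mul1e leye_eq.
  - by move: h1; rewrite mulry gtr0_sg // mul1e leye_eq.
have alpha1 : 1 <= alpha.
  have [a1 [a2 [_ _ a10 a20 ha]]] := fin 1%N isT; lra.
have eF : forall n, (\int[P]_t ((frobnorm (cheb (fun j => Ahat j t) n)) ^+ 2)%:E =
    \int[P]_t (fk n t)%:E)%E.
  by move=> n; apply: eq_integral => t _; rewrite frobnorm_sq.
suff main : forall n, (\int[P]_t (fk n t)%:E <= (D%:R * alpha ^+ n)%:E)%E /\
    (\int[P]_t (fk n.+1 t)%:E <= (D%:R * alpha ^+ n.+1)%:E)%E.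
  by move=> k; rewrite eF; exact: (main k).1.
have D0 : (0 : R) <= D%:R by [].
have fk0' n : forall t, setT t -> (0 <= (fk n t)%:E)%E by move=> t _; rewrite lee_fin.
elim => [|n [IH0 IH1]].
  split.
    have -> : (\int[P]_t (fk 0%N t)%:E = \int[P]_t (cst (D%:R)%:E) t)%E.
      by apply: eq_integral => t _; rewrite /fk cheb0 frob2_1.
    rewrite integral_cst //; set PT := (X in (_ * X)%E).
    have -> : PT = 1%E by apply: probability_setT.
    by rewrite mule1 expr0 mulr1.
  have [a1 [a2 [e1 e2 a10 a20 ha]]] := fin 1%N isT.
  have mo2 : measurable_fun setT (fun t => opnorm (Ahat 1%N t) ^+ 2).
    exact: measurable_funX (mop 1%N isT).
  apply: (@le_trans _ _ (\int[P]_t ((D%:R * opnorm (Ahat 1%N t) ^+ 2)%:E))%E).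
    apply: (ge0_le_integral P measurableT (fk0' 1%N) (mEF _ _ _ _ (mfk 1%N))).
    - apply: mEF; apply: measurable_funM => //; exact: measurable_cst.
    - move=> t _; rewrite lee_fin /fk cheb1.
      by have := frob2_mul (Ahat 1%N t) 1%:M; rewrite mulmx1 frob2_1 mulrC.
  under eq_integral do rewrite EFinM.
  rewrite (ge0_integralZl_EFin P measurableT _ (mEF _ _ _ _ mo2) D0); last first.
    by move=> t _; rewrite lee_fin sqr_ge0.
  rewrite e2 -EFinM lee_fin expr1; apply: ler_wpM2l => //; lra.
split; first exact: IH1.
have k0 : (0 < n.+2)%N by [].
have [a1 [a2 [e1 e2 a10 a20 ha]]] := fin n.+2 k0.
pose a t := opnorm (Ahat n.+2 t).
have a0 t : 0 <= a t by exact: op0.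
have pw t : fk n.+2 t <= (4 * a t ^+ 2 + 2 * a t) * fk n.+1 t + (2 * a t + 1) * fk n t.
  by rewrite /fk chebSS; exact: frob2_key.
have ma : measurable_fun setT a := mop n.+2 k0.
have ma2 : measurable_fun setT (fun t => a t ^+ 2) := measurable_funX 2 ma.
have mX1 : measurable_fun setT (fun t => 4 * a t ^+ 2 + 2 * a t).
  apply: measurable_funD; apply: measurable_funM => //; exact: measurable_cst.
have mX2 : measurable_fun setT (fun t => 2 * a t + 1).
  apply: measurable_funD; last exact: measurable_cst.
  apply: measurable_funM => //; exact: measurable_cst.
apply: (@le_trans _ _ (\int[P]_t ((4 * a t ^+ 2 + 2 * a t) * fk n.+1 t)%:E +
    \int[P]_t ((2 * a t + 1) * fk n t)%:E)%E).
  have h10 : forall t, setT t -> (0 <= ((4 * a t ^+ 2 + 2 * a t) * fk n.+1 t)%:E)%E.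
    by move=> t _; rewrite lee_fin; apply: mulr_ge0; [have := a0 t; nra | exact: fk0].
  have h20 : forall t, setT t -> (0 <= ((2 * a t + 1) * fk n t)%:E)%E.
    by move=> t _; rewrite lee_fin; apply: mulr_ge0; [have := a0 t; nra | exact: fk0].
  have mh1 : measurable_fun setT (fun t => ((4 * a t ^+ 2 + 2 * a t) * fk n.+1 t)%:E).
    by apply: mEF; apply: measurable_funM.
  have mh2 : measurable_fun setT (fun t => ((2 * a t + 1) * fk n t)%:E).
    by apply: mEF; apply: measurable_funM.
  rewrite -(ge0_integralD P measurableT h10 mh1 h20 mh2).
  apply: (ge0_le_integral P measurableT (fk0' n.+2) (mEF _ _ _ _ (mfk n.+2))).
  - under eq_fun do rewrite -EFinD.
    by apply: mEF; apply: measurable_funD; apply: measurable_funM.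
  - by move=> t _; rewrite -EFinD lee_fin; exact: pw.
pose G1 := Gen d T Ahat n.+2.
pose G2 := Jk d T Ahat n.+2.
have hG1 := sig_meas d T Ahat hmeas n.+2 k0.
have hG2 := Jk_meas d T Ahat hmeas n.+2.
have hind12 : forall A B, <<s G1 >> A -> <<s G2 >> B -> P (A `&` B) = (P A * P B)%E.
  by move=> A0 B hA hB; exact: (Jk_indep d T P Ahat hind hmeas n.+2 A0 k0 hA B hB).
have m1 : forall i l, measurable_fun setT (fun t : g_sigma_algebraType G1 => Ahat n.+2 t i l).
  move=> i l _ Y mY; apply: sub_gen_smallest; exists i, l; by exists Y.
have ma1 : measurable_fun setT (fun t : g_sigma_algebraType G1 => a t).
  exact: (measurable_opnorm _ (g_sigma_algebraType G1) (fun t => Ahat n.+2 t) m1).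
have m2 : forall j, (0 < j <= n.+1)%N -> mxm _ (g_sigma_algebraType G2) (Ahat j).
  move=> j /andP[j0 jn] i l _ Y mY; apply: sub_gen_smallest.
  exists (fun j' => if j' == j then setT `&` (fun t => Ahat j t i l) @^-1` Y else setT); split.
    move=> j' _; case: eqP => [e|_]; last exact: sigT.
    by rewrite e; apply: sub_gen_smallest; exists i, l; exists Y.
  apply/seteqP; split => t.
    by move=> ht j' _; case: eqP => [_|_].
  move=> ht; have := ht j; rewrite eqxx; apply; rewrite /= j0 /=.
  exact: (leq_trans jn).
have [mc0 mc1] := mxm_chebp _ (g_sigma_algebraType G2) Ahat n m2.
have mY1 : measurable_fun setT (fun t : g_sigma_algebraType G2 => fk n.+1 t).
  have -> : (fun t : g_sigma_algebraType G2 => fk n.+1 t) =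
      (fun t => frob2 ((chebp (fun j => Ahat j t) n).2)).
    by apply/funext => t; rewrite /fk /cheb chebp_S1.
  exact: meas_frob2.
have mY0 : measurable_fun setT (fun t : g_sigma_algebraType G2 => fk n t).
  exact: (meas_frob2 _ (g_sigma_algebraType G2) _ mc0).
have prod : forall (X : g_sigma_algebraType G1 -> R) (Y : g_sigma_algebraType G2 -> R),
    measurable_fun setT X -> measurable_fun setT Y ->
    (forall t, 0 <= X t) -> (forall t, 0 <= Y t) ->
    (\int[P]_t (X t * Y t)%:E = \int[P]_t (X t)%:E * \int[P]_t (Y t)%:E)%E.
  move=> X Y mX mY X0 Y0; under eq_integral do rewrite EFinM.
  apply: (indep_integralM d T R P G1 G2 hG1 hG2 hind12 (fun t => (X t)%:E) (fun t => (Y t)%:E)).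
  - exact: mEF.
  - exact: mEF.
  - by move=> t; rewrite lee_fin.
  - by move=> t; rewrite lee_fin.
have mX1' : measurable_fun setT (fun t : g_sigma_algebraType G1 => 4 * a t ^+ 2 + 2 * a t).
  apply: measurable_funD; apply: measurable_funM => //; try exact: measurable_cst.
  exact: measurable_funX.
have mX2' : measurable_fun setT (fun t : g_sigma_algebraType G1 => 2 * a t + 1).
  apply: measurable_funD; last exact: measurable_cst.
  apply: measurable_funM => //; exact: measurable_cst.
rewrite (prod (fun t => 4 * a t ^+ 2 + 2 * a t) (fun t => fk n.+1 t) mX1' mY1); last 2 first.
  - by move=> t; have := a0 t; nra.
  - exact: fk0.
rewrite (prod (fun t => 2 * a t + 1) (fun t => fk n t) mX2' mY0); last 2 first.
  - by move=> t; have := a0 t; nra.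
  - exact: fk0.
rewrite (int_lin _ T R P (fun t => a t ^+ 2) a 4 2 ma2 ma); last 4 first.
  - by move=> t; exact: sqr_ge0.
  - exact: a0.
  - by [].
  - by [].
have -> : (\int[P]_t (2 * a t + 1)%:E = \int[P]_t (2 * a t + 1 * (fun _ : T => 1) t)%:E)%E.
  by apply: eq_integral => t _; rewrite mulr1.
rewrite (int_lin _ T R P a (fun _ => 1) 2 1 ma (measurable_cst _)); last 4 first.
  - exact: a0.
  - by [].
  - by [].
  - by [].
have -> : (\int[P]_t (1 : R)%:E = 1)%E.
  rewrite (_ : (fun t => (1 : R)%:E) = cst 1%E) // integral_cst //.
  set PT := (X in (_ * X)%E); have -> : PT = 1%E by apply: probability_setT.
  by rewrite mule1.
rewrite /a e1 e2.
have [y1 [ey1 [y10 y1le]]] := ebound R _ _ (integral_ge0 P (fk0' n.+1)) IH1.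
have [y0 [ey0 [y00 y0le]]] := ebound R _ _ (integral_ge0 P (fk0' n)) IH0.
rewrite ey1 ey0 -!EFinM -!EFinD lee_fin.
rewrite !exprS in y1le *.
set Q := alpha ^+ n in y0le y1le *.
have Q0 : 0 <= Q by rewrite exprn_ge0 //; lra.
have s1 : (4 * a2 + 2 * a1) * y1 <= (alpha - 1) * (D%:R * (alpha * Q)).
  by apply: ler_pM => //; [nra | lra].
have s2 : (2 * a1 + 1 * 1) * y0 <= alpha * (D%:R * Q).
  by apply: ler_pM => //; [nra | lra].
have e : (alpha - 1) * (D%:R * (alpha * Q)) + alpha * (D%:R * Q) =
  D%:R * (alpha * (alpha * Q)) by ring.
rewrite -e; exact: lerD.
Qed.
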